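(* Let $n\ge1$ and let $q:\Delta_n\to C_n(S^1)$ be $q(w_1,\dots,w_n)=\{w_1\bmod 1,\dots,w_n\bmod 1\}$. If $\sigma,\sigma'$ are two faces of $\Delta_n$ with the same number of vertices which are both extremal, then $q(\sigma)=q(\sigma')$; and if they are both non-extremal, then $q(\sigma)=q(\sigma')$.
   Context: $S^1=[0,1]/(0\sim1)=\mathbb{R}/\mathbb{Z}$. $C_n(S^1)$ is the set of nonempty subsets of $S^1$ with at most $n$ elements, topologized as a quotient of $(S^1)^n$ via $(x_1,\dots,x_n)\mapsto\{x_1,\dots,x_n\}$. $\Delta_n\subset\mathbb{R}^n$ is the $n$-simplex with vertices $b_0=0$ and $b_k=e_1+\dots+e_k$ for $1\le k\le n$ ($e_i$ the standard basis vectors). A face of $\Delta_n$ is extremal if its vertex set contains both $b_0$ and $b_n$, and non-extremal otherwise. *)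

(* Defs.v *)
From HB Require Import structures.
From mathcomp Require Import all_boot all_order all_algebra.
From mathcomp Require Import boolp classical_sets reals.
Set Implicit Arguments. Unset Strict Implicit. Unset Printing Implicit Defensive.
Import Order.TTheory GRing.Theory Num.Theory.
Local Open Scope ring_scope.
Local Open Scope classical_set_scope.

(* A point of S^1 = R/Z is represented by its unique representative in [0,1). *)
Definition mod1 {R : realType} (x : R) : R := x - (Num.floor x)%:~R.

(* Vertex b_k = e_1 + ... + e_k of Delta_n (b_0 = 0), k = 0..n. *)
Definition bvert {R : realType} (n : nat) (k : 'I_n.+1) : 'rV[R]_n :=
  \row_(i < n) (if (i < k)%N then 1 else 0).

Definition face {R : realType} (n : nat) (V : {set 'I_n.+1}) : set 'rV[R]_n :=
  [set w | exists t : 'I_n.+1 -> R,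
     (forall k, 0 <= t k) /\ (forall k, k \notin V -> t k = 0) /\
     \sum_k t k = 1 /\ w = \sum_(k in V) t k *: bvert k].

(* q(w_1,...,w_n) = {w_1 mod 1, ..., w_n mod 1}, an element of C_n(S^1)
   represented as a subset of [0,1). *)
Definition qmap {R : realType} (n : nat) (w : 'rV[R]_n) : set R :=
  [set mod1 (w ord0 i) | i in [set: 'I_n]].

Definition qface {R : realType} (n : nat) (V : {set 'I_n.+1}) : set (set R) :=
  (@qmap R n) @` face V.

Definition extremal (n : nat) (V : {set 'I_n.+1}) : bool :=
  (ord0 \in V) && (ord_max \in V).

(* Main.v *)
Require Import Defs.
From mathcomp Require Import all_boot all_order all_algebra.
From mathcomp Require Import boolp classical_sets reals.
From mathcomp Require Import zify.
From Stdlib Require Import Lia.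
Set Implicit Arguments. Unset Strict Implicit. Unset Printing Implicit Defensive.
Import Order.TTheory GRing.Theory Num.Theory.
Local Open Scope ring_scope.
Local Open Scope classical_set_scope.

Lemma mod10 (R : realType) : mod1 (0 : R) = 0.
Proof. by rewrite /mod1 -(mulr0z 1) intrKfloor mulr0z subr0. Qed.
Lemma mod11 (R : realType) : mod1 (1 : R) = 0.
Proof. by rewrite /mod1 -[X in Num.floor X]/(1%:~R) intrKfloor subrr. Qed.

Section S.
Variables (n : nat) (V : {set 'I_n.+1}).
Definition fN (l : nat) : 'I_n.+1 := nth ord0 (enum V) l.
Definition rk (k : 'I_n.+1) : nat := index k (enum V).

Lemma size_enumV : size (enum V) = #|V|.
Proof. by rewrite cardE. Qed.

Lemma fN_in l : (l < #|V|)%N -> fN l \in V.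
Proof. by move=> h; rewrite -mem_enum /fN mem_nth // size_enumV. Qed.

Lemma rk_lt k : k \in V -> (rk k < #|V|)%N.
Proof. by move=> h; rewrite -size_enumV /rk index_mem mem_enum. Qed.

Lemma fN_rk k : k \in V -> fN (rk k) = k.
Proof. by move=> h; rewrite /fN /rk nth_index // mem_enum. Qed.

Lemma rk_fN l : (l < #|V|)%N -> rk (fN l) = l.
Proof. by move=> h; rewrite /fN /rk index_uniq ?enum_uniq ?size_enumV. Qed.

Lemma sorted_enumV : sorted (fun a b : 'I_n.+1 => (a < b)%N) (enum V).
Proof.
rewrite /enum_mem -enumT; apply: sorted_filter.
  by move=> a b c; apply: ltn_trans.
by have := iota_ltn_sorted 0 n.+1; rewrite -val_enum_ord sorted_map.
Qed.

Lemma ltrans : transitive (fun a b : 'I_n.+1 => (a < b)%N).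
Proof. by move=> a b c; apply: ltn_trans. Qed.

Lemma sorted_enumV' : sorted (fun a b : 'I_n.+1 => (a < b)%N) (enum V). Proof. exact: sorted_enumV. Qed.
Lemma fN_mono l1 l2 : (l1 < #|V|)%N -> (l2 < #|V|)%N ->
  ((fN l1 < fN l2)%N = (l1 < l2)%N).
Proof.
move=> h1 h2; apply/idP/idP; last first.
  move=> lt; have := sorted_ltn_nth ltrans ord0 sorted_enumV'.
  by apply; rewrite ?inE ?size_enumV.
apply: contraTT; rewrite -!leqNgt leq_eqVlt => /orP[/eqP->//|lt].
apply: ltnW; have := sorted_ltn_nth ltrans ord0 sorted_enumV'.
by apply; rewrite ?inE ?size_enumV.
Qed.

Variable R : realType.
Definition Tt (m : nat) (u : nat -> R) j := \sum_(j <= l < m) u l.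
Definition qsetN m (u : nat -> R) (e : bool) : set R :=
  [set mod1 (Tt m u j) | j in [set j : nat | (1 <= j < m)%N]] `|`
  (if e then set0 else [set 0]).
Definition Wf (u : nat -> R) : 'rV[R]_n := \sum_(l < #|V|) u l *: bvert (fN l).
Definition adm (m : nat) := [set u : nat -> R | (forall l, 0 <= u l) /\ \sum_(l < m) u l = 1].

Lemma Wf_coord u (i : 'I_n) :
  Wf u ord0 i = \sum_(l < #|V|) (if (i < fN l)%N then u l else 0).
Proof.
rewrite /Wf summxE; apply: eq_bigr => l _; rewrite mxE /bvert mxE.
by case: ifP => _; rewrite ?mulr1 ?mulr0.
Qed.

Lemma sum_split (m j : nat) (P : nat -> bool) (u : nat -> R) : (j <= m)%N ->
  (forall l, (l < m)%N -> P l = (j <= l)%N) ->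
  \sum_(l < m) (if P l then u l else 0) = Tt m u j.
Proof.
move=> hjm hP.
rewrite -(big_mkord xpredT (fun l => if P l then u l else 0)).
rewrite (big_cat_nat (leq0n j) hjm) /= big_nat big1 ?add0r; last first.
  by move=> l /andP[_ hl]; rewrite hP ?(leq_trans hl hjm) // leqNgt hl.
by apply: eq_big_nat => l /andP[a b]; rewrite hP // a.
Qed.

Lemma Tt0 m (u : nat -> R) : \sum_(l < m) u l = 1 -> Tt m u 0 = 1.
Proof. by rewrite /Tt big_mkord. Qed.
Lemma Ttm m (u : nat -> R) : Tt m u m = 0.
Proof. by rewrite /Tt big_geq. Qed.

Lemma Q (hn : (1 <= n)%N) (u : nat -> R) : \sum_(l < #|V|) u l = 1 ->
  qmap (Wf u) = qsetN #|V| u (extremal V).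
Proof.
move=> hs; apply/seteqP; split => x.
  case=> i _ <-; rewrite Wf_coord.
  set m := #|V|.
  have hex : exists j, (j == m) || (i < fN j)%N by exists m; rewrite eqxx.
  case: (ex_minnP hex) => j hj hmin.
  have hjm : (j <= m)%N by apply: hmin; rewrite eqxx.
  have hP : forall l, (l < m)%N -> (i < fN l)%N = (j <= l)%N.
    move=> l hl; apply/idP/idP => [h|h]; first by apply: hmin; rewrite h orbT.
    have hjm' : (j < m)%N by apply: leq_ltn_trans h hl.
    move: hj; rewrite (ltn_eqF hjm') /= => hj.
    move: h; rewrite leq_eqVlt => /orP[/eqP<-//|h].
    by apply: ltn_trans hj _; rewrite fN_mono.
  rewrite (sum_split _ hjm hP).
  have [j0|jpos] := posnP j.
    right; have -> : extremal V = false.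
      apply/negbTE/negP => /andP[h0 _].
      have := hP _ (rk_lt h0); rewrite fN_rk // j0 leq0n.
      by move/idP; rewrite ltn0.
    by rewrite /= j0 Tt0 // mod11.
  move: hjm; rewrite leq_eqVlt => /orP[/eqP jm|jm].
    right; have -> : extremal V = false.
      apply/negbTE/negP => /andP[_ h0].
      have hr : (rk ord_max < m)%N := rk_lt h0.
      by have := hP _ hr; rewrite fN_rk // ltn_ord => /esym; rewrite jm leqNgt hr.
    by rewrite /= jm Ttm mod10.
  by left; exists j => //=; rewrite jpos jm.
case=> [[j /andP[j1 jm] <-]|].
  have hi : (fN j.-1 < n)%N.
    have : (fN j.-1 < fN j)%N by rewrite fN_mono //; lia.
    by move=> h; apply: leq_trans h _; rewrite -ltnS ltn_ord.
  exists (Ordinal hi) => //; rewrite Wf_coord (sum_split (P := fun l => (Ordinal hi < fN l)%N) _ (ltnW jm)) //=.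
  by move=> l hl; rewrite fN_mono //; [lia | lia].
case: (boolP (extremal V)) => //= hne ->.
case h0 : (ord0 \in V).
  have hm : (n.-1 < n)%N by lia.
  exists (Ordinal hm) => //; rewrite Wf_coord (sum_split (P := fun l => (Ordinal hm < fN l)%N) _ (leqnn _)) ?Ttm ?mod10 //=.
  move=> l hl.
  have hl' := fN_in hl.
  have : fN l != ord_max by apply: contraNneq hne => e; rewrite /extremal h0 -e hl'.
  move: (ltn_ord (fN l)); rewrite -val_eqE /=; lia.
exists (Ordinal hn) => //; rewrite Wf_coord (sum_split (P := fun l => (Ordinal hn < fN l)%N) _ (leq0n _)) ?Tt0 ?mod11 //=.
move=> l hl; have hl' := fN_in hl.
have : fN l != ord0 by apply: contraFneq h0 => e; rewrite -e.
rewrite -val_eqE /=; lia.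
Qed.

Lemma sumV (M : nmodType) (F : 'I_n.+1 -> M) :
  \sum_(k in V) F k = \sum_(l < #|V|) F (fN l).
Proof. by rewrite -big_enum (big_nth ord0) size_enumV big_mkord. Qed.

Lemma face_char : face V = [set Wf u | u in adm #|V|].
Proof.
apply/seteqP; split => w.
  case=> t [t0 [tV [ts ->]]].
  exists (fun l => t (fN l)); last by rewrite /Wf sumV.
  split => // ; rewrite -sumV -ts [RHS](bigID (mem V)) /= [X in _ = _ + X]big1 ?addr0 //.
case=> u [u0 us] <-.
exists (fun k => if k \in V then u (rk k) else 0); split; first by move=> k; case: ifP.
split; first by move=> k /negbTE ->.
split.
  rewrite -big_mkcond /= sumV -[RHS]us; apply: eq_bigr => l _.
  by rewrite rk_fN.
rewrite sumV /Wf; apply: eq_bigr => l _; rewrite fN_in // rk_fN //.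
Qed.

Lemma qface_char (hn : (1 <= n)%N) :
  qface V = [set qsetN #|V| u (extremal V) | u in adm #|V|].
Proof.
rewrite /qface face_char; apply/seteqP; split => x.
  by case=> w [u hu <-] <-; exists u => //; rewrite Q //; case: hu.
by case=> u hu <-; exists (Wf u); [exists u | rewrite Q //; case: hu].
Qed.
End S.

Theorem lemma10p1 (R : realType) (n : nat) (hn : (1 <= n)%N)
  (V V' : {set 'I_n.+1}) (hV : V != finset.set0) (hV' : V' != finset.set0)
  (hcard : #|V| = #|V'|) :
  ((extremal V /\ extremal V') -> qface (R := R) V = qface V') /\
  ((~~ extremal V /\ ~~ extremal V') -> qface (R := R) V = qface V').
Proof.
rewrite !qface_char // hcard.
split => [[-> ->] | [/negbTE -> /negbTE ->]] //.
Qed.
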